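(* Let $G^\sigma$ be an oriented graph whose underlying graph $G$ is a simple connected graph with $n$ vertices and $m$ edges. Then $$sr(G^\sigma)-\alpha(G)\geqslant 4n-2m-3\sqrt{n(n-1)-2m+\tfrac{1}{4}}-\tfrac{7}{2},$$ with equality if and only if $G\cong S_n$ or $G\cong C_3$.
   Context: An oriented graph $G^\sigma$ is obtained from a simple graph $G$ by assigning a direction to each edge. Its skew-adjacency matrix $S(G^\sigma)=[s_{x,y}]$ has $s_{x,y}=1$ if there is an arc from $x$ to $y$, $s_{x,y}=-1$ if there is an arc from $y$ to $x$, and $0$ otherwise; the skew-rank $sr(G^\sigma)$ is the rank of $S(G^\sigma)$. $\alpha(G)$ is the independence number of $G$. $S_n$ denotes the star on $n$ vertices (the single vertex when $n=1$) and $C_3$ the triangle. *)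

(* Defs.v *)
From mathcomp Require Import all_boot all_order all_algebra.
Set Implicit Arguments. Unset Strict Implicit. Unset Printing Implicit Defensive.
Import Order.TTheory GRing.Theory Num.Theory.

Definition simple_graph (V : finType) (e : rel V) : Prop :=
  irreflexive e /\ symmetric e.

Definition connected_graph (V : finType) (e : rel V) : Prop :=
  forall x y : V, connect e x y.

Definition edges (V : finType) (e : rel V) : {set {set V}} :=
  [set A : {set V} | [exists x, exists y, e x y && (A == [set x; y])]].

Definition nedges (V : finType) (e : rel V) : nat := #|edges e|.

Definition independent (V : finType) (e : rel V) (S : {set V}) : bool :=
  [forall x in S, forall y in S, ~~ e x y].

Definition alpha (V : finType) (e : rel V) : nat :=
  \max_(S : {set V} | independent e S) #|S|.

Definition orientation_of (V : finType) (e o : rel V) : Prop :=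
  forall x y : V, e x y = (o x y || o y x) /\ ~~ (o x y && o y x).

Definition skew_adj (R : pzRingType) (V : finType) (o : rel V) : 'M[R]_#|V| :=
  (\matrix_(i, j) (if o (enum_val i) (enum_val j) then 1
                  else if o (enum_val j) (enum_val i) then -1 else 0))%R.

Definition skew_rank (R : fieldType) (V : finType) (o : rel V) : nat :=
  \rank (skew_adj R o).

Definition graph_iso (V W : finType) (e : rel V) (f : rel W) : Prop :=
  exists phi : V -> W, bijective phi /\ forall x y, f (phi x) (phi y) = e x y.

(* The star S_k on vertex set 'I_k with center 0 (S_1 is a single vertex). *)
Definition star_rel (k : nat) : rel 'I_k :=
  fun i j => (i != j) && ((val i == 0%N) || (val j == 0%N)).

Definition C3_rel : rel 'I_3 := fun i j => i != j.

(* Main.v *)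
Require Import Defs.
From mathcomp Require Import all_boot all_order all_algebra.
From mathcomp Require Import perm zify ring lra.
Set Implicit Arguments. Unset Strict Implicit. Unset Printing Implicit Defensive.
Import Order.TTheory GRing.Theory Num.Theory.

Section Graph.
Variables (V : finType) (e : rel V).
Hypothesis esym : symmetric e.
Hypothesis conn : connected_graph e.
Variable r : V.

Definition Pd (v : V) k := [exists p : k.-tuple V, path e r p && (last r p == v)].

Lemma Pd_ex v : exists k, Pd v k.
Proof.
have := conn r v; case/connectP => p pp ->.
exists (size p); apply/existsP; exists (in_tuple p); by rewrite /= pp eqxx.
Qed.

Definition dist v := ex_minn (Pd_ex v).

Lemma dist_par v : v != r -> exists u, e v u && (dist u < dist v).
Proof.
move=> vr; rewrite /dist; case: ex_minnP => k /existsP[t /andP[pt lt]] minP.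
have st := size_tuple t.
move: pt lt st; case/lastP: (tval t) => [|q x].
  by move=> _ /= /eqP vr'; rewrite vr' eqxx in vr.
rewrite rcons_path last_rcons size_rcons => /andP[pq ex] /eqP xv sk.
exists (last r q); rewrite -xv esym ex /=.
case: ex_minnP => k' _ min'.
have : Pd (last r q) (size q) by apply/existsP; exists (in_tuple q); rewrite /= pq eqxx.
move/min' => h; rewrite -sk; exact: leq_ltn_trans h (ltnSn _).
Qed.

Definition par v := odflt v [pick u | e v u && (dist u < dist v)].

Lemma par_spec v : v != r -> e v (par v) && (dist (par v) < dist v).
Proof.
move=> vr; rewrite /par; case: pickP => [u //|none].
by case: (dist_par vr) => u hu; rewrite none in hu.
Qed.

Lemma edges_lb : #|V|.-1 <= nedges e.
Proof.
rewrite -(cardsC1 r) /nedges.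
pose f v := [set v; par v].
have inj : {in [set~ r] &, injective f}.
  move=> v w; rewrite !inE => hv hw E.
  apply/eqP; apply: contraT => vw.
  have /andP[_ h1] := par_spec hv; have /andP[_ h2] := par_spec hw.
  have : v \in f w by rewrite -E /f set21.
  have : w \in f v by rewrite E /f set21.
  rewrite !inE (negbTE vw) eq_sym (negbTE vw) /= => /eqP wp /eqP vp.
  move: h1 h2; rewrite -wp -vp => h1 h2.
  by have := ltn_trans h1 h2; rewrite ltnn.
rewrite -(card_in_imset inj); apply: subset_leq_card.
apply/subsetP => A /imsetP[v]; rewrite !inE => hv ->.
apply/existsP; exists v; apply/existsP; exists (par v).
by have /andP[-> _] := par_spec hv; rewrite eqxx.
Qed.

End Graph.

Lemma neighbor_ex (V : finType) (e : rel V) x y :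
  x != y -> connect e x y -> exists z, e x z.
Proof.
move=> xy /connectP[[|z p] /=]; first by move=> _ yx; rewrite yx eqxx in xy.
by case/andP=> h _ _; exists z.
Qed.
Lemma indepP (V : finType) (e : rel V) S x y :
  independent e S -> x \in S -> y \in S -> ~~ e x y.
Proof. by move/forall_inP => H xS yS; exact: (forall_inP (H x xS) y yS). Qed.

Lemma edgesP (V : finType) (e : rel V) A :
  reflect (exists x y, e x y /\ A = [set x; y]) (A \in edges e).
Proof.
rewrite inE; apply: (iffP existsP) => [[x /existsP[y /andP[h /eqP->]]]|[x [y [h ->]]]].
  by exists x, y.
by exists x; apply/existsP; exists y; rewrite h eqxx.
Qed.

Lemma edges_T2 (V : finType) (e : rel V) : irreflexive e ->
  edges e \subset [set A : {set V} | #|A| == 2].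
Proof.
move=> irr; apply/subsetP => A /edgesP[x [y [h ->]]].
have xy : x != y by apply: contraTneq h => ->; rewrite irr.
by rewrite inE cards2 xy.
Qed.

Lemma indep_bound (V : finType) (e : rel V) S : irreflexive e -> independent e S ->
  (nedges e + 'C(#|S|, 2) <= 'C(#|V|, 2))%N.
Proof.
move=> irr ind.
pose sT := {x : V | x \in S}.
pose g := fun A : {set sT} => [set val x | x in A].
pose B := g @: [set A : {set sT} | #|A| == 2].
have cB : #|B| = 'C(#|S|, 2).
  rewrite card_imset; last exact: imset_inj val_inj.
  rewrite card_draws card_sig; congr 'C(_, _); apply: eq_card => x; by rewrite !inE.
have sB : B \subset [set A : {set V} | #|A| == 2].
  apply/subsetP => A /imsetP[A' ]; rewrite inE => hA' ->.
  by rewrite inE card_imset //; exact: val_inj.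
have dis : edges e :&: B = set0.
  apply/setP => A; rewrite in_set0; apply/negbTE; apply/negP => /setIP[/edgesP[x [y [h ->]]] /imsetP[A' _ eA]].
  have xS : x \in S.
    have : x \in g A' by rewrite -eA set21.
    by case/imsetP => x' _ ->; exact: valP.
  have yS : y \in S.
    have : y \in g A' by rewrite -eA set22.
    by case/imsetP => x' _ ->; exact: valP.
  by have := indepP ind xS yS; rewrite h.
rewrite /nedges -cB -card_draws.
have := cardsUI (edges e) B; rewrite dis cards0 addn0 => <-.
apply: subset_leq_card; rewrite subUset sB andbT; exact: edges_T2.
Qed.

Lemma alpha_spec (V : finType) (e : rel V) :
  (exists2 S, independent e S & #|S| = alpha e) /\
  (forall S, independent e S -> #|S| <= alpha e)%N.
Proof.
split; last by move=> S hS; rewrite /alpha; exact: (@leq_bigmax_cond _ _ (fun S : {set V} => #|S|) S hS).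
have h0 : independent e set0 by apply/forall_inP => x; rewrite inE.
have : (0 < #|independent e|)%N by apply/card_gt0P; exists set0.
move/(eq_bigmax_cond (fun S : {set V} => #|S|)) => [S hS eS].
by exists S => //; rewrite /alpha eS.
Qed.
Local Open Scope ring_scope.

Lemma rank_ge2 (F : fieldType) n (A : 'M[F]_n) i j s :
  A i i = 0 -> A j j = 0 -> A i j = s -> A j i = - s -> s * s = 1 -> (2 <= \rank A)%N.
Proof.
move=> hii hjj hij hji ss.
pose f (a : 'I_2) := if val a == 0%N then i else j.
pose B := (rowsub f (rowsub f A)^T)^T.
have rB : (\rank B <= \rank A)%N.
  rewrite /B mxrank_tr rowsubE; apply: leq_trans (mxrankM_maxr _ _) _.
  by rewrite mxrank_tr rowsubE; exact: mxrankM_maxr.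
have uB : B \in unitmx.
  apply: (proj1 (@mulmx1_unit _ _ B (- B) _)).
  apply/matrixP => a b; rewrite !mxE big_ord_recl big_ord1 !mxE /f /=.
  case: a => [[|[|//]]] ?; case: b => [[|[|//]]] ? /=;
    rewrite ?hii ?hjj ?hij ?hji; 
    rewrite ?(mul0r, mulr0, add0r, addr0, opprK, mulrN, mulNr, oppr0, ss) //.
by rewrite -(mxrank_unit uB).
Qed.

Lemma rank_cross (F : fieldType) n (A : 'M[F]_n) c :
  (forall a b, A a b != 0 -> (a == c) || (b == c)) -> (\rank A <= 2)%N.
Proof.
move=> H.
pose u1 : 'M[F]_(n,1) := \col_a ((a == c)%:R).
pose w1 := row c A.
pose u2 : 'M[F]_(n,1) := \col_a (if a == c then 0 else A a c).
pose w2 : 'M[F]_(1,n) := \row_b ((b == c)%:R).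
have -> : A = row_mx u1 u2 *m col_mx w1 w2.
  rewrite mul_row_col; apply/matrixP => a b; rewrite !mxE !big_ord1 !mxE.
  case: (eqVneq a c) => [->|ac]; first by rewrite mul1r mul0r addr0.
  case: (eqVneq b c) => [->|bc]; first by rewrite mul0r add0r mulr1.
  rewrite mul0r add0r mulr0.
  have : ~~ ((a == c) || (b == c)) by rewrite (negbTE ac) (negbTE bc).
  by move/(contra (H a b)); rewrite negbK => /eqP.
apply: leq_trans (mxrankM_maxl _ _) _; exact: rank_leq_col.
Qed.

Lemma rank_odd (F : numFieldType) n (A : 'M[F]_n) :
  A^T = - A -> odd n -> (\rank A <= n.-1)%N.
Proof.
move=> tA on.
have : \rank A != n.
  apply/negP => /eqP h.
  have : A \in unitmx by rewrite -row_free_unit /row_free h.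
  rewrite unitmxE unitfE => /negP; apply.
  have h1 : \det A = - \det A.
    by rewrite -{1}det_tr tA -scaleN1r detZ -signr_odd on expr1 mulN1r.
  have : \det A *+ 2 == 0 by rewrite mulr2n {1}h1 addNr.
  by rewrite mulrn_eq0.
move=> ne; have := rank_leq_row A; rewrite leq_eqVlt (negbTE ne) /= => h.
by move: h; case: (\rank A) => // k; case: (n) => // n'.
Qed.

Section Skew.
Variables (R : numFieldType) (V : finType) (e o : rel V).
Hypothesis irr : irreflexive e.
Hypothesis ori : orientation_of e o.

Lemma o_irr x : o x x = false.
Proof. by have := (ori x x).1; rewrite irr; case: (o x x). Qed.

Lemma skewE i j : skew_adj R o i j =
  if o (enum_val i) (enum_val j) then 1 else if o (enum_val j) (enum_val i) then -1 else 0.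
Proof. by rewrite mxE. Qed.

Lemma skew_tr : (skew_adj R o)^T = - skew_adj R o.
Proof.
apply/matrixP => i j; rewrite !mxE.
have := (ori (enum_val i) (enum_val j)).2.
by case: (o (enum_val i) _); case: (o (enum_val j) _) => //= _; rewrite ?opprK ?oppr0.
Qed.

Lemma skew_anti i j : skew_adj R o j i = - skew_adj R o i j.
Proof.
rewrite !skewE.
have := (ori (enum_val i) (enum_val j)).2.
by case: (o (enum_val i) _); case: (o (enum_val j) _) => //= _; rewrite ?opprK ?oppr0.
Qed.

Lemma skew_nz i j : skew_adj R o i j != 0 -> e (enum_val i) (enum_val j).
Proof.
rewrite skewE (ori _ _).1.
by case: (o (enum_val i) _); case: (o (enum_val j) _); rewrite ?eqxx.
Qed.

Lemma skew_ge2 x y : e x y -> (2 <= \rank (skew_adj R o))%N.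
Proof.
move=> exy.
pose A := skew_adj R o.
have Aji : A (enum_rank y) (enum_rank x) = - A (enum_rank x) (enum_rank y).
  by rewrite /A skew_anti.
apply: (rank_ge2 _ _ _ Aji); rewrite ?skewE ?enum_rankK ?o_irr //.
have := (ori x y); rewrite exy => -[/esym ho hn].
by move: ho hn; case: (o x y); case: (o y x) => //= _ _; rewrite ?mulr1 ?mulrNN ?mulr1.
Qed.

End Skew.

Lemma cross_indep (V : finType) (e : rel V) c :
  (forall x y, e x y -> (x == c) || (y == c)) -> independent e [set~ c].
Proof.
move=> H; apply/forall_inP => x; rewrite !inE => xc; apply/forall_inP => y; rewrite !inE => yc.
by apply/negP => /H; rewrite (negbTE xc) (negbTE yc).
Qed.

Lemma iso_star_of (V : finType) (e : rel V) (c : V) :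
  (forall x y, e x y = (x != y) && ((x == c) || (y == c))) -> graph_iso e (@star_rel #|V|).
Proof.
move=> H.
have n0 : (0 < #|V|)%N by apply/card_gt0P; exists c.
pose z0 : 'I_#|V| := Ordinal n0.
pose phi x := tperm (enum_rank c) z0 (enum_rank x).
have bij : bijective phi.
  exists (fun k => enum_val (tperm (enum_rank c) z0 k)) => x; rewrite /phi.
    by rewrite tpermK enum_rankK.
  by rewrite enum_valK tpermK.
have inj := bij_inj bij.
have phic : phi c = z0 by rewrite /phi tpermL.
have h0 x : (val (phi x) == 0%N) = (x == c).
  have -> : (val (phi x) == 0%N) = (phi x == z0) by [].
  by rewrite -phic (inj_eq inj).
exists phi; split => // x y.
by rewrite /star_rel (inj_eq inj) !h0 H.
Qed.

Lemma iso_C3_of (V : finType) (e : rel V) :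
  #|V| = 3%N -> (forall x y, e x y = (x != y)) -> graph_iso e C3_rel.
Proof.
move=> H3 H.
pose phi x := cast_ord H3 (enum_rank x).
have bij : bijective phi.
  exists (fun k => enum_val (cast_ord (esym H3) k)) => x; rewrite /phi.
    by rewrite cast_ordK enum_rankK.
  by rewrite enum_valK cast_ordKV.
exists phi; split => // x y.
by rewrite /C3_rel (inj_eq (bij_inj bij)) H.
Qed.

Lemma star_center (V : finType) (e : rel V) :
  (0 < #|V|)%N -> graph_iso e (@star_rel #|V|) ->
  exists c, forall x y, e x y -> (x == c) || (y == c).
Proof.
move=> n0 [phi [[g gK Kg] H]].
pose z0 : 'I_#|V| := Ordinal n0.
exists (g z0) => x y; rewrite -H /star_rel => /andP[_ /orP[] /eqP h].
  by apply/orP; left; rewrite -(gK x); apply/eqP; congr g; apply: val_inj.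
by apply/orP; right; rewrite -(gK y); apply/eqP; congr g; apply: val_inj.
Qed.

Lemma C3_complete (V : finType) (e : rel V) :
  graph_iso e C3_rel -> #|V| = 3%N /\ forall x y, e x y = (x != y).
Proof.
move=> [phi [bij H]]; split; first by rewrite (bij_eq_card bij) card_ord.
by move=> x y; rewrite -H /C3_rel (inj_eq (bij_inj bij)).
Qed.

Lemma complete_edges (V : finType) (e : rel V) :
  (forall x y, e x y = (x != y)) -> nedges e = 'C(#|V|, 2).
Proof.
move=> H; rewrite /nedges -card_draws; apply: eq_card => A.
rewrite [in RHS]inE; apply/edgesP/cards2P => [[x [y [h ->]]]|[x [y [h ->]]]].
  by exists x, y; rewrite -H.
by exists x, y; rewrite H.
Qed.

Lemma star_of_alpha (V : finType) (e : rel V) S :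
  simple_graph e -> connected_graph e -> independent e S ->
  #|S| = #|V|.-1 -> (1 < #|V|)%N ->
  exists c, forall x y, e x y = (x != y) && ((x == c) || (y == c)).
Proof.
move=> [irr sym] conn ind hS n1.
have : #|~: S| == 1%N.
  by have := cardsC S; rewrite hS => h; apply/eqP; lia.
case/cards1P => c hc.
have inS x : (x \in S) = (x != c).
  by rewrite -in_set1 -hc inE negbK.
have adj x : x != c -> e x c.
  move=> xc; case: (neighbor_ex xc (conn x c)) => z exz.
  case: (eqVneq z c) => [<- //|zc].
  by have := indepP ind (_ : x \in S) (_ : z \in S); rewrite exz !inS xc zc => /(_ isT isT).
exists c => x y.
case: (eqVneq x c) => [->|xc]; case: (eqVneq y c) => [->|yc].
- by rewrite irr.
- by rewrite sym adj // eq_sym yc eqxx.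
- by rewrite adj // xc orbT.
rewrite /= andbF; apply/negbTE; apply: indepP ind _ _; by rewrite inS.
Qed.
Lemma r_facts (R : rcfType) (N M a S : R) :
  2 <= N -> N - 1 <= M -> 1 <= a -> 0 <= S ->
  S ^+ 2 = N * (N - 1) - 2 * M + 1 / 4 ->
  a * (a - 1) + 2 * M <= N * (N - 1) -> (N = 2 \/ 3 <= N) ->
  [/\ a - 1/2 <= S, 1/2 <= S, S <= N - 3/2,
     0 <= (N - 3/2 - S) * (N + S - 7/2) &
     4 * N - 2 * M - 3 * S - 7 / 2 = 3/2 - S - (N - 3/2 - S) * (N + S - 7/2)].
Proof.
move=> hN hM ha hS hS2 hA hN3.
have h1 : a - 1/2 <= S by nra.
have h2 : 1/2 <= S by nra.
have h3 : S <= N - 3/2 by nra.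
split => //.
- case: hN3 => [N2|N3]; last by apply: mulr_ge0; lra.
  have -> : N - 3/2 - S = 0 by lra.
  by rewrite mul0r.
- have hM2 : 2 * M = N * (N - 1) + 1/4 - S ^+ 2 by rewrite hS2; ring.
  by rewrite hM2; field.
Qed.

Lemma sqr_half (R : rcfType) (x : R) : 0 <= x -> x ^+ 2 = 1/4 -> x = 1/2.
Proof. move=> h0 h; nra. Qed.

Lemma r_single (R : rcfType) (N M a k S : R) :
  N = 1 -> k = 0 -> a <= N -> 1 <= a -> 0 <= S -> 0 <= M ->
  S ^+ 2 = N * (N - 1) - 2 * M + 1 / 4 ->
  a * (a - 1) + 2 * M <= N * (N - 1) ->
  k - a = 4 * N - 2 * M - 3 * S - 7 / 2.
Proof.
move=> N1 k0 haN ha1 hS0 hM0 hS2 hA.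
have M0 : M = 0 by nra.
have S12 : S = 1/2 by apply: sqr_half => //; rewrite hS2 M0 N1; field.
have a1 : a = 1 by lra.
by rewrite k0 a1 N1 M0 S12; field.
Qed.

Lemma r_eq (R : rcfType) (N M a k S : R) :
  (N = 2 \/ 3 <= N) -> a - 1/2 <= S -> 1/2 <= S -> S <= N - 3/2 ->
  0 <= (N - 3/2 - S) * (N + S - 7/2) -> 2 <= k ->
  S ^+ 2 = N * (N - 1) - 2 * M + 1 / 4 ->
  k - a = 3/2 - S - (N - 3/2 - S) * (N + S - 7/2) ->
  a = N - 1 \/ (N = 3 /\ M = 3).
Proof.
move=> hN3 h1 h2 h3 hP hk hS2 heq.
have P0 : (N - 3/2 - S) * (N + S - 7/2) = 0 by lra.
have aS : a = 1/2 + S by lra.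
move/eqP: P0; rewrite mulf_eq0 => /orP[/eqP f1|/eqP f2]; first by left; lra.
right; case: hN3 => [N2|N3']; first by exfalso; lra.
have N3 : N = 3 by lra.
have S12 : S = 1/2 by lra.
split => //.
have : (1/2 : R) ^+ 2 = 3 * (3 - 1) - 2 * M + 1/4 by rewrite -S12 -N3.
move=> h; lra.
Qed.

Lemma r_back_star (R : rcfType) (N a k S : R) :
  a - 1/2 <= S -> S <= N - 3/2 -> 2 <= k -> k <= 2 -> N - 1 <= a ->
  k - a = 3/2 - S - (N - 3/2 - S) * (N + S - 7/2).
Proof.
move=> h1 h3 hk k2 aN.
have f1 : N - 3/2 - S = 0 by lra.
rewrite f1 mul0r; lra.
Qed.

Lemma r_back_C3 (R : rcfType) (N M a k S : R) :
  N = 3 -> M = 3 -> 0 <= S -> 1 <= a -> a - 1/2 <= S -> 2 <= k -> k <= 2 ->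
  S ^+ 2 = N * (N - 1) - 2 * M + 1 / 4 ->
  k - a = 3/2 - S - (N - 3/2 - S) * (N + S - 7/2).
Proof.
move=> N3 M3 hS0 ha1 h1 hk k2 hS2.
have S12 : S = 1/2 by apply: sqr_half => //; rewrite hS2 M3 N3; field.
have a1 : a = 1 by lra.
have k2' : k = 2 by lra.
by rewrite k2' a1 N3 S12; field.
Qed.

Lemma bin2_mul x : ('C(x, 2) * 2 = x * x.-1)%N.
Proof.
have -> : 2%N = 2`! by [].
by rewrite bin_ffact ffactnS ffactn1.
Qed.

Unset Implicit Arguments. Set Strict Implicit.

Theorem theorem1p5 (R : rcfType) (V : finType) (e o : rel V) :
  (0 < #|V|)%N -> simple_graph e -> connected_graph e -> orientation_of e o ->
  let n : R := (#|V|)%:R in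
  let m : R := (nedges e)%:R in
  let lhs : R := (skew_rank R o)%:R - (alpha e)%:R in
  let rhs : R := 4 * n - 2 * m - 3 * Num.sqrt (n * (n - 1) - 2 * m + 1 / 4) - 7 / 2 in
  rhs <= lhs /\ (lhs = rhs <-> (graph_iso e (@star_rel #|V|) \/ graph_iso e C3_rel)).
Proof.
move=> n0 [irr sym] conn ori; cbv zeta.
case/card_gt0P: (n0) => r _.
have F1 := edges_lb sym conn r.
have [[S0 indS0 cS0] amax] := alpha_spec e.
have F3 := indep_bound irr indS0.
have F4 : (1 <= alpha e)%N.
  rewrite -(cards1 r); apply: amax.
  by apply/forall_inP => x /set1P ->; apply/forall_inP => y /set1P ->; rewrite irr.
have F5 : (alpha e <= #|V|)%N by rewrite -cS0 max_card.
have Fk : (skew_rank R o <= #|V|)%N by apply: rank_leq_row.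
have hAn : (2 * nedges e + alpha e * (alpha e).-1 <= #|V| * #|V|.-1)%N.
  by move: F3; rewrite cS0 -!bin2_mul => h; lia.
set N : R := (#|V|)%:R. set M : R := (nedges e)%:R.
set a : R := (alpha e)%:R. set k : R := (skew_rank R o)%:R.
have eN : N = (#|V|.-1)%:R + 1 by rewrite /N natr1 prednK.
have ea : a = (alpha e).-1%:R + 1 by rewrite /a natr1 prednK.
have hM : N - 1 <= M by rewrite eN addrK /M ler_nat.
have ha1 : 1 <= a by rewrite /a (ler_nat R 1).
have haN : a <= N by rewrite /a /N ler_nat.
have hk0 : 0 <= k by rewrite /k (ler_nat R 0).
have hA : a * (a - 1) + 2 * M <= N * (N - 1).
  have e1 : a - 1 = (alpha e).-1%:R by rewrite ea addrK.
  have e2 : N - 1 = (#|V|.-1)%:R by rewrite eN addrK.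
  rewrite e1 e2 /a /N /M -(natrM R 2) -!natrM -natrD ler_nat; lia.
have hD : 0 <= N * (N - 1) - 2 * M + 1 / 4.
  by move: ha1 hA; clear; move=> ha1 hA; nra.
set S := Num.sqrt _.
have hS0 : 0 <= S by apply: sqrtr_ge0.
have hS2 : S ^+ 2 = N * (N - 1) - 2 * M + 1 / 4 by apply: sqr_sqrtr.
have hM0 : 0 <= M by rewrite /M (ler_nat R 0).
have [n1|n2] : (#|V| = 1 \/ 2 <= #|V|)%N.
  by move: n0; case: (#|V|) => [|[|n]] //; [left | right].
  have N1 : N = 1 by rewrite /N n1.
  have hk : k = 0.
    have h : (skew_rank R o <= #|V|.-1)%N by apply: rank_odd (skew_tr R ori) _; rewrite n1.
    have h0 : skew_rank R o = 0%N by apply/eqP; rewrite -leqn0; rewrite n1 in h.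
    by rewrite /k h0.
  rewrite -(r_single N1 hk haN ha1 hS0 hM0 hS2 hA); split => //; split => // _; left.
  have allr : forall x, x = r.
    move=> x; have : #|[set~ r]| = 0%N by rewrite cardsC1 n1.
    move/eqP; rewrite cards_eq0 => /eqP h0.
    have : x \notin [set~ r] by rewrite h0 inE.
    by rewrite !inE negbK => /eqP.
  apply: (iso_star_of (c := r)) => x y.
  by rewrite (allr x) (allr y) irr eqxx.
have hN : 2 <= N by rewrite /N (ler_nat R 2).
have hN3 : N = 2 \/ 3 <= N.
  have [h2|h3] : (#|V| = 2 \/ 3 <= #|V|)%N.
    by move: n2; case: (#|V|) => [|[|[|n]]] //; [left | right].
    by left; rewrite /N h2.
  by right; rewrite /N (ler_nat R 3).
have hk2 : 2 <= k.
  have : (0 < #|[set~ r]|)%N by rewrite cardsC1 -ltnS prednK.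
  case/card_gt0P => y; rewrite !inE => yr.
  have ry : r != y by rewrite eq_sym.
  have [z ez] := neighbor_ex ry (conn r y).
  by rewrite /k (ler_nat R 2); apply: (skew_ge2 R irr ori ez).
have [h1 h2 h3 hP hrhs] := r_facts hN hM ha1 hS0 hS2 hA hN3.
rewrite hrhs.
split; first by move: hP h1 hk2; clear; move=> *; lra.
split.
- move=> heq.
  case: (r_eq hN3 h1 h2 h3 hP hk2 hS2 heq) => [aN'|[N3 M3]].
  + left.
    have aN : alpha e = #|V|.-1.
      by apply/eqP; rewrite -(eqr_nat R) -/a aN' eN addrK.
    have [c hc] := star_of_alpha (conj irr sym) conn indS0 (etrans cS0 aN) n2.
    exact: iso_star_of hc.
  + right.
    have n3 : #|V| = 3%N by apply/eqP; rewrite -(eqr_nat R) -/N N3.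
    have m3 : nedges e = 3%N by apply/eqP; rewrite -(eqr_nat R) -/M M3.
    refine (iso_C3_of n3 _); move=> x y.
    case: (eqVneq x y) => [->|xy]; first by rewrite irr.
    case exy: (e x y) => //.
    have ind2 : independent e [set x; y].
      apply/forall_inP => u /set2P[]->; apply/forall_inP => w /set2P[]->;
        by rewrite ?irr ?exy // sym exy.
    by have := indep_bound irr ind2; rewrite cards2 xy n3 m3.
- case => [iso|iso].
  + have [c hc] := star_center n0 iso.
    have ind := cross_indep hc.
    have aN1 : N - 1 <= a.
      by rewrite eN addrK /a ler_nat -(cardsC1 c); apply: amax.
    have k2 : k <= 2.
      rewrite /k (ler_nat R _ 2); apply: (rank_cross (c := enum_rank c)) => i j.
      move/(skew_nz ori)/hc.
      by rewrite -!(inj_eq enum_val_inj) !enum_rankK.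
    exact: r_back_star h1 h3 hk2 k2 aN1.
  + have [n3 comp] := C3_complete iso.
    have M3 : M = 3 by rewrite /M (complete_edges comp) n3.
    have N3 : N = 3 by rewrite /N n3.
    have k2 : k <= 2.
      have h : (skew_rank R o <= #|V|.-1)%N by apply: rank_odd (skew_tr R ori) _; rewrite n3.
      by rewrite /k (ler_nat R _ 2); rewrite n3 in h.
    exact: r_back_C3 N3 M3 hS0 ha1 h1 hk2 k2 hS2.
Qed.
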